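(* Let $\eta$ and $\hat\eta$ be probability measures on $\mathbb{R}^d$ with positive, continuously differentiable Lebesgue densities (also denoted $\eta,\hat\eta$). Suppose $\hat\eta$ satisfies a Poincaré inequality with constant $C^{-1}$, $C>0$: for every (sufficiently regular) $\phi:\mathbb{R}^d\to\mathbb{R}$ with $\int\phi\,d\hat\eta=0$, $$\int\phi(\theta)^2\,\hat\eta(d\theta)\le C^{-1}\int\|\nabla\phi(\theta)\|_2^2\,\hat\eta(d\theta).$$ Then $$d_H(\eta,\hat\eta)\le(2C)^{-1/2}F_{2,\eta}(\eta,\hat\eta).$$
   Context: $d_H(\eta,\hat\eta)=\{\int|\eta(\theta)^{1/2}-\hat\eta(\theta)^{1/2}|^2\,d\theta\}^{1/2}$ is the Hellinger distance. $F_{2,\eta}(\eta,\hat\eta)=\left\{\int\|\nabla\log\eta(\theta)-\nabla\log\hat\eta(\theta)\|_2^2\,\eta(d\theta)\right\}^{1/2}$. *)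

(* Defs.v *)
From HB Require Import structures.
From mathcomp Require Import all_boot all_order all_algebra.
From mathcomp Require Import all_classical all_reals all_analysis.
Set Implicit Arguments. Unset Strict Implicit. Unset Printing Implicit Defensive.
Import Order.TTheory GRing.Theory Num.Theory.
Import numFieldNormedType.Exports.
Local Open Scope classical_set_scope.
Local Open Scope ring_scope.

(* R^d is represented by row vectors 'rV[R]_d.  We equip it with the Borel
   sigma-algebra, i.e. the product sigma-algebra generated by the coordinate
   projections (exactly as mathcomp-analysis does for n.-tuple T). *)
Definition rV_display : measure_display -> measure_display.
Proof. exact. Qed.

Section measurable_rV.
Context {R : realType} (n : nat).

Definition rV_coord : 'I_n -> 'rV[R]_n -> R := fun i x => x ord0 i.

Let rV_set0 : g_sigma_preimage rV_coord set0.
Proof. exact: sigma_algebra0. Qed.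

Let rV_setC A : g_sigma_preimage rV_coord A -> g_sigma_preimage rV_coord (~` A).
Proof. exact: sigma_algebraC. Qed.

Let rV_bigcup (F : _^nat) : (forall i, g_sigma_preimage rV_coord (F i)) ->
  g_sigma_preimage rV_coord (\bigcup_i (F i)).
Proof. exact: sigma_algebra_bigcup. Qed.

HB.instance Definition _ := @isMeasurable.Build (rV_display default_measure_display)
  'rV[R]_n (g_sigma_preimage rV_coord) rV_set0 rV_setC rV_bigcup.

End measurable_rV.

Section defs.
Context {R : realType} {d : nat}.

Definition is_lebesgue_Rd (mu : {measure set 'rV[R]_d -> \bar R}) : Prop :=
  forall a b : 'rV[R]_d, (forall i, a ord0 i <= b ord0 i) ->
    mu [set x | forall i, a ord0 i <= x ord0 i < b ord0 i] =
    (\prod_(i < d) (b ord0 i - a ord0 i))%:E.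

Definition ebasis (i : 'I_d) : 'rV[R]_d := delta_mx ord0 i.

Definition grad (f : 'rV[R]_d -> R) (x : 'rV[R]_d) : 'rV[R]_d :=
  \row_i ('D_(ebasis i) f x).

Definition sqnorm2 (v : 'rV[R]_d) : R := \sum_(i < d) v ord0 i ^+ 2.

Definition C1 (f : 'rV[R]_d -> R) : Prop :=
  (forall x, differentiable f x) /\
  (forall i, continuous (fun x => 'D_(ebasis i) f x)).

Definition sqrte (x : \bar R) : \bar R :=
  match x with
  | r%:E => (Num.sqrt r)%:E
  | +oo%E => +oo%E
  | -oo%E => 0%E
  end.

Local Open Scope ereal_scope.

Definition hellinger (mu : {measure set 'rV[R]_d -> \bar R})
    (eta etah : 'rV[R]_d -> R) : \bar R :=
  sqrte (\int[mu]_x ((`|Num.sqrt (eta x) - Num.sqrt (etah x)|) ^+ 2)%:E).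

Definition F2 (mu : {measure set 'rV[R]_d -> \bar R})
    (eta etah : 'rV[R]_d -> R) : \bar R :=
  sqrte (\int[mu]_x
    (sqnorm2 (grad (fun t => ln (eta t)) x - grad (fun t => ln (etah t)) x)
       * eta x)%:E).

Definition poincare (mu : {measure set 'rV[R]_d -> \bar R})
    (etah : 'rV[R]_d -> R) (C : R) : Prop :=
  forall phi : 'rV[R]_d -> R, C1 phi ->
    mu.-integrable setT (fun x => (phi x * etah x)%:E) ->
    \int[mu]_x (phi x * etah x)%:E = 0 ->
    \int[mu]_x (phi x ^+ 2 * etah x)%:E <=
      (C^-1)%:E * \int[mu]_x (sqnorm2 (grad phi x) * etah x)%:E.

Definition pos_C1_density (mu : {measure set 'rV[R]_d -> \bar R})
    (eta : 'rV[R]_d -> R) : Prop :=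
  (forall x, 0 < eta x)%R /\ C1 eta /\ \int[mu]_x (eta x)%:E = 1.

End defs.

(* Main.v *)
Require Import Defs.
From HB Require Import structures.
From mathcomp Require Import all_boot all_order all_algebra.
From mathcomp Require Import all_classical all_reals all_analysis.
From mathcomp Require Import ring lra measurable_realfun.
Set Implicit Arguments. Unset Strict Implicit.
Import Order.TTheory GRing.Theory Num.Theory.
Import numFieldNormedType.Exports.
Local Open Scope classical_set_scope.
Local Open Scope ring_scope.

Section meas.
Context {R : realType} {d : nat}.

Lemma coord_meas (i : 'I_d) (A : set R) : measurable A ->
  measurable (@rV_coord R d i @^-1` A).
Proof.
move=> mA; apply: sub_sigma_algebra.
rewrite -bigcup_seq/=; exists i => /=; first by rewrite mem_index_enum.
by exists A => //; rewrite setTI.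
Qed.

Definition box (q : {ffun 'I_d -> rat * rat}) : set 'rV[R]_d :=
  [set x | forall i, ratr (q i).1 < x ord0 i < ratr (q i).2].

Lemma box_meas q : measurable (box q).
Proof.
have -> : box q = \bigcap_(i in [set: 'I_d])
   (@rV_coord R d i @^-1` `](ratr (q i).1), (ratr (q i).2)[%classic).
  apply/seteqP; split => x /=.
    by move=> h i _; rewrite /rV_coord /= in_itv /= h.
  by move=> h i; have := h i I; rewrite /rV_coord /= in_itv.
apply: fin_bigcap_measurable; first exact: finite_finset.
by move=> i _; apply: coord_meas; exact: measurable_itv.
Qed.

Lemma open_meas (O : set 'rV[R]_d) : open O -> measurable O.
Proof.
move=> oO.
pose F q := if pselect (box q `<=` O) then box q else set0.
have -> : O = \bigcup_q F q.
  apply/seteqP; split; last first.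
    by move=> x [q _]; rewrite /F; destruct pselect as [h|]; [exact: h|].
  move=> x Ox.
  have /nbhs_ballP[e /= e0 eO] := oO x Ox.
  have hq : forall i : 'I_d, exists p : rat * rat,
      (x ord0 i - e < ratr p.1 < x ord0 i) && (x ord0 i < ratr p.2 < x ord0 i + e).
    move=> i.
    have [a ha] := @rat_in_itvoo R (x ord0 i - e) (x ord0 i) (ltac:(rewrite gtrBl; exact: e0)).
    have [b hb] := @rat_in_itvoo R (x ord0 i) (x ord0 i + e) (ltac:(rewrite ltrDl; exact: e0)).
    by exists (a, b); rewrite !in_itv /= in ha hb; rewrite ha hb.
  have [f hf] := choice hq.
  exists [ffun i => f i] => //.
  have bq : box [ffun i => f i] `<=` O.
    move=> y hy; apply: eO.
    rewrite mx_norm_ball /ball_ /Num.norm /= mx_normrE.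
    apply/bigmax_ltP; split => // -[i j] _ /=.
    rewrite !mxE (ord1 i).
    have := hy j; rewrite ffunE => /andP[h1 h2].
    have /andP[/andP[h3 h4] /andP[h5 h6]] := hf j.
    rewrite ltr_norml; apply/andP; split.
      by rewrite ltrBrDl; lra.
    by rewrite ltrBlDl; lra.
  rewrite /F; destruct pselect as [h|]; last by [].
  move=> j; rewrite ffunE.
  by have /andP[/andP[h3 h4] /andP[h5 h6]] := hf j; rewrite h4 h5.
apply: countable_bigcupT_measurable; first exact: countableP.
by move=> q; rewrite /F; destruct pselect; [exact: box_meas|exact: measurable0].
Qed.

Lemma cont_meas (f : 'rV[R]_d -> R) : continuous f -> measurable_fun setT f.
Proof.
move=> /continuousP cf; apply: (measurability _ (RGenOpens.measurableE R)).
move=> _ [_ [a [b ->] <-]]; apply: measurableI => //.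
by apply: open_meas; apply/cf/interval_open.
Qed.
End meas.
Section calc.
Context {R : realType} {d : nat}.

Lemma chain (h : R -> R) (f : 'rV[R]_d -> R) x (h' : R) v :
  is_derive (f x) 1 h h' -> differentiable f x ->
  differentiable (h \o f) x /\ ('D_v (h \o f) x = h' * 'D_v f x).
Proof.
move=> hd fd.
have dh : differentiable h (f x) by apply/derivable1_diffP; exact: ex_derive.
split; first exact: differentiable_comp.
rewrite deriveE; last exact: differentiable_comp.
rewrite diff_comp // /= (deriveE v fd) (diff1E dh) derive1E derive_val.
by rewrite mulrC.
Qed.

Lemma D_ln (f : 'rV[R]_d -> R) (x v : 'rV[R]_d) : 0 < f x -> differentiable f x ->
  differentiable (fun y => ln (f y)) x /\ ('D_v (fun y => ln (f y)) x = (f x)^-1 * 'D_v f x).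
Proof. by move=> fx df; exact: (chain v (is_derive1_ln fx) df). Qed.

Variables (eta etah : 'rV[R]_d -> R).
Hypotheses (eta0 : forall x, 0 < eta x) (etah0 : forall x, 0 < etah x).
Hypotheses (deta : forall x, differentiable eta x)
  (detah : forall x, differentiable etah x).

Definition lf := fun y => ln (eta y).
Definition lh := fun y => ln (etah y).
Definition gg := (2^-1 : R) \*: (lf - lh).
Definition phi0 := expR \o gg.

Lemma dlf x : differentiable lf x.
Proof. by have [] := D_ln 0 (eta0 x) (deta x). Qed.
Lemma dlh x : differentiable lh x.
Proof. by have [] := D_ln 0 (etah0 x) (detah x). Qed.

Lemma dgg x : differentiable gg x.
Proof. apply: differentiableZ; apply: differentiableB; [exact: dlf|exact: dlh]. Qed.

Lemma Dgg x v : 'D_v gg x = 2^-1 * ('D_v lf x - 'D_v lh x).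
Proof.
rewrite deriveZ; last exact/diff_derivable/differentiableB/dlh/dlf.
by rewrite deriveB //; apply: diff_derivable; [exact: dlf|exact: dlh].
Qed.

Lemma dphi m x : differentiable (phi0 - cst m) x.
Proof.
apply: differentiableB => //.
by have [] := chain 0 (is_derive_expR (gg x)) (dgg x).
Qed.

Lemma Dphi m x v : 'D_v (phi0 - cst m) x = phi0 x * (2^-1 * ('D_v lf x - 'D_v lh x)).
Proof.
have [h1 h2] := chain v (is_derive_expR (gg x)) (dgg x).
rewrite deriveB //; last exact: diff_derivable.
by rewrite derive_cst subr0 h2 Dgg.
Qed.
End calc.

Section main.
Context {R : realType} {d : nat} (mu : {measure set 'rV[R]_d -> \bar R}).
Variables (eta etah : 'rV[R]_d -> R).
Hypotheses (eta0 : forall x, 0 < eta x) (etah0 : forall x, 0 < etah x).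
Hypotheses (deta : forall x, differentiable eta x)
  (detah : forall x, differentiable etah x).

Local Notation p0 := (phi0 eta etah).

Lemma p0E x : p0 x = expR (2^-1 * (ln (eta x) - ln (etah x))).
Proof. by []. Qed.

Lemma p0_gt0 x : 0 < p0 x.
Proof. by rewrite p0E expR_gt0. Qed.

Lemma p0sq x : p0 x ^+ 2 * etah x = eta x.
Proof.
rewrite p0E -expRM_natl mulrA divff ?pnatr_eq0 // mul1r expRB !lnK ?posrE //.
by rewrite mulfVK // gt_eqF.
Qed.

Definition s x := p0 x * etah x.

Lemma sqrt_s x : Num.sqrt (eta x) * Num.sqrt (etah x) = s x.
Proof.
have -> : Num.sqrt (eta x) = p0 x * Num.sqrt (etah x).
  have h : eta x = (p0 x * Num.sqrt (etah x))^+2.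
    by rewrite exprMn sqr_sqrtr ?ltW // p0sq.
  rewrite h sqrtr_sqr ger0_norm // mulr_ge0 ?sqrtr_ge0 //.
  exact: ltW (p0_gt0 x).
by rewrite -mulrA -expr2 sqr_sqrtr ?ltW.
Qed.

Lemma hellE x : `|Num.sqrt (eta x) - Num.sqrt (etah x)| ^+ 2 =
  eta x + etah x - 2 * s x.
Proof.
rewrite real_normK ?num_real // sqrrB !sqr_sqrtr ?ltW // -sqrt_s.
rewrite -mulr_natr; ring.
Qed.

Lemma s_gt0 x : 0 < s x.
Proof. by rewrite /s mulr_gt0 // p0_gt0. Qed.

Lemma s_le x : 2 * s x <= eta x + etah x.
Proof. by rewrite -subr_ge0 -hellE sqr_ge0. Qed.


Lemma ceta : continuous eta.
Proof. by move=> x; apply: differentiable_continuous. Qed.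
Lemma cetah : continuous etah.
Proof. by move=> x; apply: differentiable_continuous. Qed.
Lemma dp0 x : differentiable p0 x.
Proof. exact: (chain (0 : 'rV[R]_d) (is_derive_expR _) (dgg eta0 etah0 deta detah x)).1. Qed.
Lemma cp0 : continuous p0.
Proof. by move=> x; apply: differentiable_continuous; exact: dp0. Qed.

Lemma mE : measurable_fun setT eta. Proof. by apply: cont_meas; exact: ceta. Qed.
Lemma mH : measurable_fun setT etah. Proof. by apply: cont_meas; exact: cetah. Qed.
Lemma mp0 : measurable_fun setT p0. Proof. by apply: cont_meas; exact: cp0. Qed.
Lemma ms : measurable_fun setT s. Proof. exact: measurable_funM mp0 mH. Qed.

Hypotheses (ieta : (\int[mu]_x (eta x)%:E = 1)%E) (ietah : (\int[mu]_x (etah x)%:E = 1)%E).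

Lemma int_pos (f : 'rV[R]_d -> R) : (forall x, 0 < f x) -> measurable_fun setT f ->
  (\int[mu]_x (f x)%:E = 1)%E -> mu.-integrable setT (EFin \o f).
Proof.
move=> f0 mf If; apply/integrableP; split; first exact/measurable_EFinP.
rewrite (eq_integral (fun x => (f x)%:E)) ?If ?ltry // => x _.
by rewrite /= ger0_norm // ltW.
Qed.

Lemma iE : mu.-integrable setT (EFin \o eta).
Proof. exact: int_pos eta0 mE ieta. Qed.
Lemma iH : mu.-integrable setT (EFin \o etah).
Proof. exact: int_pos etah0 mH ietah. Qed.

Lemma intg (f : 'rV[R]_d -> R) (c : R) : measurable_fun setT f ->
  (forall x, `|f x| <= c * (eta x + etah x)) -> mu.-integrable setT (EFin \o f).
Proof.
move=> mf fc.
apply: (@le_integrable _ _ _ mu setT measurableT _ (EFin \o (fun x => c * (eta x + etah x)))).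
- exact/measurable_EFinP.
- move=> x _; rewrite /= lee_fin (le_trans (fc x)) //.
  exact: real_ler_norm (num_real _).
- apply: (eq_integrable measurableT _ _ _ (integrableZl measurableT c (integrableD measurableT iE iH))).
  by move=> x _.
Qed.

Lemma lin (f g : 'rV[R]_d -> R) a b : mu.-integrable setT (EFin \o f) ->
  mu.-integrable setT (EFin \o g) ->
  (\int[mu]_x (a * f x + b * g x)%:E =
   a%:E * \int[mu]_x (f x)%:E + b%:E * \int[mu]_x (g x)%:E)%E.
Proof.
move=> fi gi.
have i1 : mu.-integrable setT (EFin \o (fun x => a * f x)).
  by apply: (eq_integrable measurableT _ _ _ (integrableZl measurableT a fi)) => x _.
have i2 : mu.-integrable setT (EFin \o (fun x => b * g x)).
  by apply: (eq_integrable measurableT _ _ _ (integrableZl measurableT b gi)) => x _.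
rewrite (eq_integral (fun x => ((EFin \o (fun y => (a * f y)%R)) \+ (EFin \o (fun y => (b * g y)%R)))%E x)) //.
rewrite integralD_EFin //.
by rewrite -!integralZl //.
Qed.

Lemma lin_int (f g : 'rV[R]_d -> R) a b : mu.-integrable setT (EFin \o f) ->
  mu.-integrable setT (EFin \o g) ->
  mu.-integrable setT (EFin \o (fun x => a * f x + b * g x)).
Proof.
move=> fi gi.
apply: (eq_integrable measurableT _ _ _ (integrableD measurableT
   (integrableZl measurableT a fi) (integrableZl measurableT b gi))).
by move=> x _.
Qed.

Lemma is_int : mu.-integrable setT (EFin \o s).
Proof.
apply: (intg (c := 1) ms) => x.
have h1 := s_le x; have h2 := s_gt0 x; have h3 := eta0 x; have h4 := etah0 x.
rewrite ger0_norm; lra.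
Qed.

Definition m := fine (\int[mu]_x (s x)%:E).

Lemma IsE : (\int[mu]_x (s x)%:E = m%:E)%E.
Proof. by rewrite fineK //; exact: (integrable_fin_num measurableT is_int). Qed.

Lemma m_ge0 : 0 <= m.
Proof.
rewrite /m fine_ge0 // integral_ge0 // => x _.
by rewrite lee_fin ltW // s_gt0.
Qed.

Lemma hell_int : (\int[mu]_x ((`|Num.sqrt (eta x) - Num.sqrt (etah x)|) ^+ 2)%:E
   = (2 - 2 * m)%:E)%E.
Proof.
rewrite (eq_integral (fun x => (1 * eta x + 1 * (1 * etah x + (-2) * s x))%:E)); last first.
  by move=> x _; rewrite hellE; congr (_%:E); ring.
rewrite lin ?iE //; last by apply: lin_int; [exact: iH|exact: is_int].
rewrite lin ?iH ?is_int // ieta ietah IsE /=.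
rewrite -!EFinM -!EFinD; congr (_%:E); ring.
Qed.

Lemma m_le1 : m <= 1.
Proof.
have : (0 <= \int[mu]_x ((`|Num.sqrt (eta x) - Num.sqrt (etah x)|) ^+ 2)%:E)%E.
  by apply: integral_ge0 => x _; rewrite lee_fin sqr_ge0.
rewrite hell_int lee_fin; lra.
Qed.


Hypotheses (cDeta : forall i, continuous (fun x => 'D_(ebasis i) eta x))
  (cDetah : forall i, continuous (fun x => 'D_(ebasis i) etah x)).

Local Notation ph := (phi0 eta etah - cst m).

Lemma phE x : ph x = p0 x - m. Proof. by []. Qed.

Lemma cDl (f : 'rV[R]_d -> R) i : (forall x, 0 < f x) -> (forall x, differentiable f x) ->
  continuous (fun x => 'D_(ebasis i) f x) ->
  continuous (fun x => 'D_(ebasis i) (fun t => ln (f t)) x).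
Proof.
move=> f0 df cf.
have -> : (fun x => 'D_(ebasis i) (fun t => ln (f t)) x) =
    (fun x => (f x)^-1 * 'D_(ebasis i) f x).
  by apply: funext => x; exact: (D_ln _ (f0 x) (df x)).2.
move=> x; apply: (continuousM (s := fun x => (f x)^-1) (t := fun x => 'D_(ebasis i) f x)); last exact: cf.
apply: continuousV; first by rewrite gt_eqF.
exact: differentiable_continuous.
Qed.

Lemma C1ph : C1 ph.
Proof.
split; first by move=> x; exact: (dphi eta0 etah0 deta detah m x).
move=> i.
have -> : (fun x => 'D_(ebasis i) ph x) = (fun x => p0 x *
   (2^-1 * ('D_(ebasis i) (lf eta) x - 'D_(ebasis i) (lh etah) x))).
  by apply: funext => x; exact: Dphi.
move=> x; apply: continuousM; first exact: cp0.
apply: continuousM; first exact: cst_continuous.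
apply: continuousB.
  exact: (cDl eta0 deta (@cDeta i)).
exact: (cDl etah0 detah (@cDetah i)).
Qed.

Lemma ph_int : mu.-integrable setT (fun x => (ph x * etah x)%:E).
Proof.
apply: (eq_integrable measurableT _ _ _ (lin_int 1 (-m) is_int iH)) => x _ /=.
rewrite /s phE; congr (_%:E); ring.
Qed.

Lemma ph_mean : (\int[mu]_x (ph x * etah x)%:E = 0)%E.
Proof.
rewrite (eq_integral (fun x => (1 * s x + (-m) * etah x)%:E)); last first.
  by move=> x _; rewrite /s phE; congr (_%:E); ring.
rewrite lin ?is_int ?iH // IsE ietah -!EFinM -EFinD; congr (_%:E); ring.
Qed.

Lemma ph_var : (\int[mu]_x (ph x ^+ 2 * etah x)%:E = (1 - m ^+ 2)%:E)%E.
Proof.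
rewrite (eq_integral (fun x => (1 * eta x + 1 * ((-2 * m) * s x + m ^+ 2 * etah x))%:E)); last first.
  by move=> x _; rewrite phE -(p0sq x) /s; congr (_%:E); ring.
rewrite lin ?iE //; last by apply: lin_int; [exact: is_int|exact: iH].
rewrite lin ?is_int ?iH // ieta IsE ietah -!EFinM -!EFinD; congr (_%:E); ring.
Qed.

Definition K x := sqnorm2 (grad (fun t => ln (eta t)) x - grad (fun t => ln (etah t)) x) * eta x.

Lemma grad_ph x : sqnorm2 (grad ph x) * etah x = 4^-1 * K x.
Proof.
have e : sqnorm2 (grad ph x) = (p0 x * 2^-1) ^+ 2 *
    sqnorm2 (grad (fun t => ln (eta t)) x - grad (fun t => ln (etah t)) x).
  rewrite /sqnorm2 mulr_sumr; apply: eq_bigr => i _.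
  rewrite !mxE (Dphi eta0 etah0 deta detah) /lf /lh; ring.
rewrite e /K -(p0sq x).
have -> : (4 : R)^-1 = 2^-1 * 2^-1.
  by rewrite -invfM; congr (_^-1); rewrite -natrM.
ring.
Qed.

Lemma K_ge0 x : 0 <= K x.
Proof.
apply: mulr_ge0; last exact: ltW.
by rewrite /sqnorm2; apply: sumr_ge0 => i _; exact: sqr_ge0.
Qed.

Lemma mK : measurable_fun setT K.
Proof.
apply: measurable_funM; last exact: mE.
apply: measurable_sum => i /=.
apply: measurable_funX.
have -> : (fun x => (grad (fun t => ln (eta t)) x - grad (fun t => ln (etah t)) x) ord0 i)
  = (fun x => 'D_(ebasis i) (fun t => ln (eta t)) x - 'D_(ebasis i) (fun t => ln (etah t)) x).
  by apply: funext => x; rewrite !mxE.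
apply: measurable_funB; apply: cont_meas.
  exact: (cDl eta0 deta (@cDeta i)).
exact: (cDl etah0 detah (@cDetah i)).
Qed.

Lemma grad_int : (\int[mu]_x (sqnorm2 (grad ph x) * etah x)%:E =
   (4^-1)%:E * \int[mu]_x (K x)%:E)%E.
Proof.
rewrite (eq_integral (fun x => (4^-1)%:E * (K x)%:E))%E; last first.
  by move=> x _; rewrite grad_ph.
rewrite ge0_integralZl_EFin //.
- by move=> x _; rewrite lee_fin K_ge0.
- by apply/measurable_EFinP; exact: mK.
Qed.


Lemma final (C : R) : 0 < C -> poincare mu etah C ->
  (hellinger mu eta etah <= (Num.sqrt (2 * C))^-1%:E * F2 mu eta etah)%E.
Proof.
move=> C0 P.
have := P ph C1ph ph_int ph_mean.
rewrite ph_var grad_int /hellinger /F2 hell_int -/K.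
have IK0 : (0 <= \int[mu]_x (K x)%:E)%E.
  by apply: integral_ge0 => x _; rewrite lee_fin K_ge0.
move: IK0; case: (\int[mu]_x (K x)%:E)%E => [r||] //= r0 h.
- rewrite -!EFinM lee_fin in h; rewrite -EFinM lee_fin.
  rewrite lee_fin in r0.
  have hm0 := m_ge0; have hm1 := m_le1.
  have hc : 0 < C^-1 by rewrite invr_gt0.
  have C2 : 0 <= 2 * C by rewrite mulr_ge0 // ltW.
  rewrite -sqrtrV // -sqrtrM; last by rewrite invr_ge0.
  rewrite ler_sqrt; last by rewrite mulr_ge0 // invr_ge0.
  rewrite invfM.
  have e1 : m * (1 - m) >= 0 by rewrite mulr_ge0 // subr_ge0.
  have e2 : (2:R)^-1 * C^-1 * r = 2 * (C^-1 * (4^-1 * r)).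
    have -> : (4 : R)^-1 = 2^-1 * 2^-1.
      by rewrite -invfM; congr (_^-1); rewrite -natrM.
    transitivity (((2:R) * 2^-1) * (2^-1 * C^-1 * r)); last by ring.
    by rewrite divff ?mul1r // pnatr_eq0.
  rewrite e2; nra.
- rewrite mulry gtr0_sg ?mul1e ?leey //.
  by rewrite invr_gt0 sqrtr_gt0 mulr_gt0.
Qed.

End main.

Unset Implicit Arguments.
Set Strict Implicit.

Theorem lemma2 (R : realType) (d : nat)
    (mu : {measure set 'rV[R]_d -> \bar R}) (eta etah : 'rV[R]_d -> R) (C : R) :
  is_lebesgue_Rd mu ->
  pos_C1_density mu eta ->
  pos_C1_density mu etah ->
  0 < C ->
  poincare mu etah C ->
  (hellinger mu eta etah <= (Num.sqrt (2 * C))^-1%:E * F2 mu eta etah)%E.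
Proof.
move=> _ [e0 [[de ce] ie]] [h0 [[dh ch] ih]] C0 P.
exact: (final e0 h0 de dh ie ih ce ch C0 P).
Qed.
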